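(* Let $S$ be a finite $0$-rectangular band with $m$ rows and $n=am$ columns in its non-zero $\mathscr{D}$-class, where $a\ge 1$ is an integer. If $S$ has a permutation matching, then $S$ has an involution matching.
   Context: A finite $0$-rectangular band with $m$ rows and $n$ columns: $S=(R\times C)\cup\{0\}$ with $R=\{1,\dots,m\}$, $C=\{1,\dots,n\}$, and a set $E\subseteq R\times C$ meeting every row and every column; multiplication is $(i,j)(k,l)=(i,l)$ if $(k,j)\in E$ and $0$ otherwise, with $0$ a zero element. Its non-zero $\mathscr{D}$-class is $R\times C$. For $x\in S$, $V(x)=\{y\in S: xyx=x,\ yxy=y\}$. A permutation matching of $S$ is a bijection $\phi:S\to S$ with $\phi(x)\in V(x)$ for all $x\in S$; an involution matching is a permutation matching $\phi$ with $\phi\circ\phi=\mathrm{id}_S$. *)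

(* Defs.v *)
From mathcomp Require Import all_boot.
Set Implicit Arguments. Unset Strict Implicit. Unset Printing Implicit Defensive.

(* A 0-rectangular band with rows 'I_m, columns 'I_n and sandwich set E.
   Elements: None = 0, Some (i,j) = the non-zero element (i,j). *)
Definition zrb (m n : nat) : finType := option ('I_m * 'I_n)%type.

Definition zrb_mul (m n : nat) (E : {set 'I_m * 'I_n}) (x y : zrb m n) : zrb m n :=
  match x, y with
  | Some (i, j), Some (k, l) => if (k, j) \in E then Some (i, l) else None
  | _, _ => None
  end.

Definition meets_rows_cols (m n : nat) (E : {set 'I_m * 'I_n}) : Prop :=
  (forall i : 'I_m, exists j : 'I_n, (i, j) \in E) /\
  (forall j : 'I_n, exists i : 'I_m, (i, j) \in E).

Definition inverse_of (m n : nat) (E : {set 'I_m * 'I_n}) (x y : zrb m n) : Prop :=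
  zrb_mul E (zrb_mul E x y) x = x /\ zrb_mul E (zrb_mul E y x) y = y.

Definition permutation_matching (m n : nat) (E : {set 'I_m * 'I_n})
  (phi : zrb m n -> zrb m n) : Prop :=
  bijective phi /\ forall x, inverse_of E x (phi x).

Definition involution_matching (m n : nat) (E : {set 'I_m * 'I_n})
  (phi : zrb m n -> zrb m n) : Prop :=
  permutation_matching E phi /\ forall x, phi (phi x) = x.

(* Main.v *)
Require Import Defs.
From mathcomp Require Import all_boot zify.
Set Implicit Arguments. Unset Strict Implicit. Unset Printing Implicit Defensive.

Section HallS.
Variables (T1 T2 : finType) (nb : T1 -> {set T2}) (y0 : T2).

Definition NB (B : {set T1}) : {set T2} := [set y | [exists x in B, y \in nb x]].

Lemma NBU B C : NB (B :|: C) = NB B :|: NB C.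
Proof.
apply/setP=> y; rewrite !inE; apply/existsP/orP.
  by case=> x /andP[]; rewrite inE => /orP[] xB yx; [left|right]; apply/existsP; exists x; rewrite xB.
by case=> /existsP[x /andP[xB yx]]; exists x; rewrite inE xB ?orbT.
Qed.

Lemma hall_gen k : forall (A : {set T1}) (D : {set T2}), #|A| <= k ->
  (forall B : {set T1}, B \subset A -> #|B| <= #|D :&: NB B|) ->
  exists f : T1 -> T2, {in A &, injective f} /\ {in A, forall x, f x \in D :&: nb x}.
Proof.
elim: k => [|k IH] A D hA hH.
  have A0 : A = set0 by apply/eqP; rewrite -cards_eq0 -leqn0.
  by exists (fun _ => y0); split=> x; rewrite A0 inE.
case: (set_0Vmem A) => [A0|[x xA]].
  by exists (fun _ => y0); split=> z; rewrite A0 inE.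
case: (boolP [exists B : {set T1}, [&& B != set0, B \proper A & #|D :&: NB B| <= #|B|]]).
- case/existsP=> B /and3P [Bn0 BA cB].
  have BA' := proper_sub BA.
  have [f1 [inj1 p1]] : exists f : T1 -> T2, {in B &, injective f} /\ {in B, forall x, f x \in D :&: nb x}.
    apply: IH => [|C CB]; first by have := proper_card BA; lia.
    by apply: hH; apply: subset_trans CB BA'.
  have [f2 [inj2 p2]] : exists f : T1 -> T2, {in A :\: B &, injective f} /\
       {in A :\: B, forall x, f x \in (D :\: NB B) :&: nb x}.
    apply: IH => [|C CAB].
      have : #|A :\: B| < #|A|.
        rewrite cardsDS // ltn_subrL; apply/andP; split; last by apply: leq_ltn_trans (proper_card BA).
        by rewrite lt0n cards_eq0.
      lia.
    have hCB := hH (C :|: B).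
    have CBs : C :|: B \subset A.
      by rewrite subUset BA' andbT; apply: subset_trans CAB (subsetDl _ _).
    have dis : [disjoint C & B].
      rewrite disjoint_subset; apply/subsetP=> z zC; have := subsetP CAB z zC; by rewrite !inE => /andP[].
    have I0 : C :&: B = set0.
      by apply/setP=> z; rewrite !inE; case zC: (z \in C) => //=; rewrite (disjointFr dis zC).
    have eCB : #|C :|: B| = #|C| + #|B| by have := cardsUI C B; rewrite I0 cards0 addn0.
    have h := hCB CBs; rewrite eCB NBU in h.
    have h3 : #|D :&: (NB C :|: NB B)| <= #|(D :\: NB B) :&: NB C| + #|D :&: NB B|.
      apply: leq_trans (leq_card_setU _ _) => /=; apply: subset_leq_card.
      apply/subsetP=> z; rewrite in_setU !in_setI in_setD in_setU.
      by case: (z \in NB B); case: (z \in D); case: (z \in NB C).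
    have h5 : #|C| + #|B| <= #|(D :\: NB B) :&: NB C| + #|B|.
      by apply: leq_trans (leq_trans h h3) _; rewrite leq_add2l.
    by rewrite leq_add2r in h5.
  exists (fun z => if z \in B then f1 z else f2 z); split.
    move=> z1 z2 z1A z2A /=.
    case: (boolP (z1 \in B)) => z1B; case: (boolP (z2 \in B)) => z2B.
    + exact: inj1.
    + move=> e; have := p1 _ z1B; have := p2 z2; rewrite !inE z2B z2A => /(_ isT).
      by rewrite -e => /andP[/andP[/negP nB _] _] /andP[_ H]; case: nB; apply/existsP; exists z1; rewrite z1B.
    + move=> e; have := p1 _ z2B; have := p2 z1; rewrite !inE z1B z1A => /(_ isT).
      by rewrite e => /andP[/andP[/negP nB _] _] /andP[_ H]; case: nB; apply/existsP; exists z2; rewrite z2B.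
    + by apply: inj2; rewrite inE ?z1B ?z2B.
  move=> z zA /=; case: (boolP (z \in B)) => zB; first exact: p1.
  have := p2 z; rewrite !inE zB zA => /(_ isT) /andP[/andP[_ ->] ->]; by [].
- rewrite negb_exists => /forallP hB.
  have : #|[set x]| <= #|D :&: NB [set x]| by apply: hH; rewrite sub1set.
  rewrite cards1; case/card_gt0P=> y; rewrite !inE => /andP[yD /existsP[x' /andP[]]].
  rewrite inE => /eqP -> yx.
  have [f' [inj' p']] : exists f : T1 -> T2, {in A :\ x &, injective f} /\
       {in A :\ x, forall z, f z \in (D :\ y) :&: nb z}.
    apply: IH => [|C CAx].
      have : #|A :\ x| < #|A| by rewrite (cardsD1 x A) xA.
      lia.
    case: (set_0Vmem C) => [->|[c cC]]; first by rewrite cards0.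
    have hC := hB C.
    have Cn0 : C != set0 by apply/set0Pn; exists c.
    have CA : C \proper A.
      apply/properP; split; first by apply: subset_trans CAx (subsetDl _ _).
      exists x => //; apply/negP=> xC; have := subsetP CAx x xC; by rewrite !inE eqxx.
    rewrite Cn0 CA /= -ltnNge in hC.
    have h3 : #|D :&: NB C| <= #|(D :\ y) :&: NB C|.+1.
      apply: leq_trans (_ : #|y |: ((D :\ y) :&: NB C)| <= _); last by rewrite cardsU1; case: (_ \notin _).
      apply: subset_leq_card; apply/subsetP=> z; rewrite !inE; case: (z == y) => //=.
    lia.
  exists (fun z => if z == x then y else f' z); split.
    move=> z1 z2 z1A z2A /=.
    case: (eqVneq z1 x) => z1x; case: (eqVneq z2 x) => z2x.
    + by rewrite z1x z2x.
    + move=> e; have := p' z2; rewrite !inE z2x z2A => /(_ isT).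
      by rewrite -e eqxx.
    + move=> e; have := p' z1; rewrite !inE z1x z1A => /(_ isT).
      by rewrite e eqxx.
    + by apply: inj'; rewrite !inE ?z1x ?z2x.
  move=> z zA /=; case: (eqVneq z x) => [->|zx]; first by rewrite inE yD.
  have := p' z; rewrite !inE zx zA => /(_ isT) /andP[/andP[_ ->] ->]; by [].
Qed.
End HallS.

Lemma inv_some m n (E : {set 'I_m * 'I_n}) i j y :
  inverse_of E (Some (i, j)) y ->
  exists k l, y = Some (k, l) /\ (k, j) \in E /\ (i, l) \in E.
Proof.
case: y => [[k l]|] [h1 h2]; last by move: h1; rewrite /zrb_mul.
exists k, l; split=> //; move: h1; rewrite /zrb_mul.
by case: ((k, j) \in E) => //=; case: ((i, l) \in E).
Qed.

Theorem proposition2p3 (m n a : nat) (E : {set 'I_m * 'I_n}) :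
  (1 <= a)%N -> n = (a * m)%N -> meets_rows_cols E ->
  (exists phi : zrb m n -> zrb m n, permutation_matching E phi) ->
  exists psi : zrb m n -> zrb m n, involution_matching E psi.
Proof.
move=> a1 en _ [phi [phib phiv]].
case: m E phi phib phiv en => [|m'] E phi phib phiv en.
  exists id; split=> //; split; first by exists id.
  by case=> [[i ?]|]; [have := ltn_ord i; rewrite ltn0 | split].
set m := m'.+1.
have y0 : ('I_m * 'I_a)%type by split; [exact: ord0 | exact: (Ordinal a1)].
pose nb (j : 'I_n) : {set 'I_m * 'I_a} := [set p | (p.1, j) \in E].
have phii := bij_inj phib.
have hH : forall B : {set 'I_n}, B \subset setT -> #|B| <= #|setT :&: NB nb B|.
  move=> B _; rewrite setTI.
  pose NR := [set k | [exists j in B, (k, j) \in E]].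
  have eN : NB nb B = setX NR setT.
    apply/setP=> [[k t]]; rewrite /NB !inE /=; rewrite andbT; apply/existsP/existsP=> [] [j /andP[jB]];
      by rewrite ?inE => h; exists j; rewrite ?inE jB.
  rewrite eN cardsX cardsT card_ord.
  pose X := [set Some p | p in setX [set: 'I_m] B] : {set zrb m n}.
  pose Y := [set Some p | p in setX NR [set: 'I_n]] : {set zrb m n}.
  have cX : #|X| = m * #|B|.
    by rewrite card_imset; [rewrite cardsX cardsT card_ord | move=> ? ? []].
  have cY : #|Y| = #|NR| * n.
    by rewrite card_imset; [rewrite cardsX cardsT card_ord | move=> ? ? []].
  have : #|phi @: X| <= #|Y|.
    apply: subset_leq_card; apply/subsetP=> z /imsetP [x /imsetP [[i j] ]].
    rewrite !inE /= => jB -> ->.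
    have [k [l [-> [kj il]]]] := inv_some (phiv (Some (i, j))).
    apply/imsetP; exists (k, l) => //; rewrite !inE andbT; apply/existsP; exists j; by rewrite jB /= kj.
  have ci : #|phi @: X| = #|X| by apply: card_imset.
  move=> h0; have h : m * #|B| <= #|NR| * n by rewrite -cX -cY -ci; exact: h0.
  move: (#|NR|) (#|B|) h => p q; rewrite en => h.
  rewrite -(@leq_pmul2l m) //; apply: leq_trans h _; rewrite /m; nia.
have [f [finj fp]] := @hall_gen _ _ nb y0 _ _ _ (leqnn #|[set: 'I_n]|) hH.
have finj' : injective f by move=> x y; apply: finj; rewrite inE.
have fb : bijective f by apply: inj_card_bij finj' _; rewrite card_prod !card_ord en mulnC.
case: fb => g fg gf.
have fE j : ((f j).1, j) \in E by have := fp j; rewrite !inE => /(_ isT) /andP[_].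
pose psi (x : zrb m n) : zrb m n :=
  if x is Some (i, j) then Some ((f j).1, g (i, (f j).2)) else None.
have psiK : forall x, psi (psi x) = x.
  by case=> [[i j]|] //=; rewrite gf /= -surjective_pairing fg.
exists psi; split=> //; split; first by exists psi.
case=> [[i j]|]; last by split.
have e1 := fE j.
have e2 : (i, g (i, (f j).2)) \in E by have := fE (g (i, (f j).2)); rewrite gf.
rewrite /inverse_of /= e1 /= ifT; last exact: e2. rewrite /= ifT; last exact: e2. by rewrite /= e1.
Qed.
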